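(* Let $A,B\in\mathbb{R}^{n\times n}$ be two rank-one positive semi-definite matrices and let $C=A-B$. Then $c:=2\,\mathrm{tr}[C^2]-(\mathrm{tr}[C])^2\ge 0$, with $c=0$ if and only if $A=B$. *)

(* Defs.v *)
From mathcomp Require Import all_boot all_order all_algebra.
Set Implicit Arguments. Unset Strict Implicit. Unset Printing Implicit Defensive.
Import Order.TTheory GRing.Theory Num.Theory.
Local Open Scope ring_scope.

Definition psd (R : realFieldType) (n : nat) (A : 'M[R]_n) : Prop :=
  A^T = A /\ forall x : 'cV[R]_n, 0 <= (x^T *m A *m x) 0 0.

(* Main.v *)
Require Import Defs.
From mathcomp Require Import all_boot all_order all_algebra.
From mathcomp Require Import ring lra.
Import Order.TTheory GRing.Theory Num.Theory.
Local Open Scope ring_scope.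

Lemma rank1_sq (F : fieldType) n (A : 'M[F]_n) :
  \rank A = 1%N -> A *m A = \tr A *: A.
Proof.
case: n A => [|n] A hr.
  by have := rank_leq_row A; rewrite hr.
have hP : (pid_mx 1 : 'M[F]_n.+1) =
  (delta_mx 0 (0 : 'I_1)) *m delta_mx (0 : 'I_1) 0.
  rewrite mul_delta_mx; apply/matrixP => i j; rewrite !mxE.
  case: i => [[|i] hi]; case: j => [[|j] hj].
  all: rewrite /eq_op /= ?andbF //.
have hA := mulmx_ebase A; rewrite hr hP in hA.
set u := col_ebase A *m delta_mx 0 (0 : 'I_1).
set v := delta_mx (0 : 'I_1) 0 *m row_ebase A.
have -> : A = u *m v by rewrite -hA /u /v !mulmxA.
have hvu : v *m u = ((v *m u) 0 0)%:M by apply: mx11_scalar.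
rewrite mulmxA -[u *m v *m u]mulmxA hvu mul_mx_scalar -scalemxAl.
congr (_ *: _); rewrite mxtrace_mulC /mxtrace big_ord1 //.
Qed.

Lemma tr_sq_sym (R : realFieldType) n (C : 'M[R]_n) :
  C^T = C -> \tr (C *m C) = \sum_i \sum_j C i j ^+ 2.
Proof.
move=> hC; apply: eq_bigr => i _; rewrite mxE; apply: eq_bigr => j _.
by rewrite -{2}hC mxE expr2.
Qed.

Lemma tr_sq_ge0 (R : realFieldType) n (C : 'M[R]_n) :
  C^T = C -> 0 <= \tr (C *m C).
Proof.
move=> hC; rewrite tr_sq_sym //; apply: sumr_ge0 => i _; apply: sumr_ge0 => j _.
exact: sqr_ge0.
Qed.

Lemma tr_sq_eq0 (R : realFieldType) n (C : 'M[R]_n) :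
  C^T = C -> \tr (C *m C) = 0 -> C = 0.
Proof.
move=> hC; rewrite tr_sq_sym // => h0; apply/matrixP => i j; rewrite mxE.
have h1 : forall i, \sum_j C i j ^+ 2 = 0.
  move=> k; apply: (psumr_eq0P _ h0) => // l _.
  by apply: sumr_ge0 => m _; exact: sqr_ge0.
have : C i j ^+ 2 = 0.
  by apply: (psumr_eq0P _ (h1 i)) => // l _; exact: sqr_ge0.
by move/eqP; rewrite sqrf_eq0 => /eqP.
Qed.

Lemma psd_tr_ge0 (R : realFieldType) n (A : 'M[R]_n) : psd A -> 0 <= \tr A.
Proof.
move=> [_ hA]; apply: sumr_ge0 => i _.
have := hA (delta_mx i 0); rewrite trmx_delta -rowE -colE !mxE //.
Qed.

Theorem proposition1 (R : realFieldType) (n : nat) (A B : 'M[R]_n) :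
  psd A -> \rank A = 1%N -> psd B -> \rank B = 1%N ->
  let C := A - B in
  let c := 2 * \tr (C *m C) - (\tr C) ^+ 2 in
  0 <= c /\ (c = 0 <-> A = B).
Proof.
move=> psA rA psB rB C c.
have [sA _] := psA; have [sB _] := psB.
have hp := (@psd_tr_ge0 _ _ _ psA); have hq := (@psd_tr_ge0 _ _ _ psB).
have hAA : \tr (A *m A) = \tr A ^+ 2 by rewrite rank1_sq // mxtraceZ expr2.
have hBB : \tr (B *m B) = \tr B ^+ 2 by rewrite rank1_sq // mxtraceZ expr2.
have hBA : \tr (B *m A) = \tr (A *m B) by rewrite mxtrace_mulC.
set p := \tr A in hp hAA *; set q := \tr B in hq hBB *; set m := \tr (A *m B) in hBA *.
have hp0 : p != 0.
  apply/negP => /eqP p0.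
  have A0 : A = 0 by apply: tr_sq_eq0 => //; rewrite hAA p0 expr0n.
  by move: rA; rewrite A0 mxrank0.
set X := m *: A - p ^+ 2 *: B.
have sX : X^T = X by rewrite /X linearB !linearZ /= sA sB.
have hX : \tr (X *m X) = p ^+ 2 * (p ^+ 2 * q ^+ 2 - m ^+ 2).
  rewrite /X !(mulmxBl, mulmxBr) -!scalemxAl -!scalemxAr !raddfB /= !mxtraceZ.
  rewrite hAA hBB hBA; ring.
have hm : m ^+ 2 <= p ^+ 2 * q ^+ 2.
  have := @tr_sq_ge0 _ _ _ sX; rewrite hX pmulr_rge0 ?subr_ge0 //.
  by rewrite exprn_gt0 // lt_neqAle eq_sym hp0 hp.
have hpq : 0 <= p * q by rewrite mulr_ge0.
have hmpq : m <= p * q.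
  case: (lerP m 0) => hm0; first exact: le_trans hm0 hpq.
  by rewrite -ler_sqr ?nnegrE ?(ltW hm0) // exprMn.
have sC : C^T = C by rewrite /C linearB /= sA sB.
have hC : \tr C = p - q by rewrite /C raddfB.
have hCC : \tr (C *m C) = p ^+ 2 + q ^+ 2 - 2 * m.
  rewrite /C !(mulmxBl, mulmxBr) !raddfB /= hAA hBB hBA; ring.
have hc : c = (p - q) ^+ 2 + 4 * (p * q - m) by rewrite /c hCC hC; ring.
split; first by rewrite hc addr_ge0 ?sqr_ge0 // mulr_ge0 // subr_ge0.
split => [c0 | AB]; last by rewrite /c /C AB subrr mul0mx !mxtrace0; ring.
apply/eqP; rewrite -subr_eq0; apply/eqP; apply: tr_sq_eq0 => //.
have hs0 := sqr_ge0 (p - q).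
have hs : (p - q) ^+ 2 = p ^+ 2 + q ^+ 2 - 2 * (p * q) by ring.
rewrite hc in c0; rewrite hCC; lra.
Qed.
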